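(* Let $\vartheta\in(0,1)$, let $c,r$ be positive integers and $\alpha,\beta$ positive integers, and consider the single-agent trust model described in the context. If $\vartheta< c/(c+r)$, then $p_{\rm quit}=\mathbb{P}(\tau<\infty)=1$, i.e. $\tau<\infty$ almost surely.
   Context: Single-agent trust model: $\vartheta$ is the institution's true trustworthiness; $(X_t)_{t\in\mathbb{N}}$ are i.i.d. with $\mathbb{P}(X_t=1)=\vartheta$, $\mathbb{P}(X_t=0)=1-\vartheta$. The agent has actions $A_t\in\{0,1\}$ and observes $X_t$ only in rounds with $A_t=1$. Let $\hat S_t=\sum_{s=1}^t X_s\mathbf{1}_{\{A_s=1\}}$, $\hat F_t=\sum_{s=1}^t(1-X_s)\mathbf{1}_{\{A_s=1\}}$ (so $\hat S_0=\hat F_0=0$), and $\hat\vartheta_t=\frac{\alpha+\hat S_t}{\alpha+\beta+\hat S_t+\hat F_t}$ (the posterior mean under a Beta$(\alpha,\beta)$ prior). The agent acts myopically: $A_t=1$ if $r\hat\vartheta_n-c(1-\hat\vartheta_n)\ge 0$ for all $n\in\{0,1,\dots,t-1\}$, and $A_t=0$ otherwise. The quitting time is $\tau:=\inf\{t\in\mathbb{N}\cup\{\infty\}: r\hat\vartheta_t-c(1-\hat\vartheta_t)<0\}$ and $p_{\rm quit}:=\mathbb{P}(\tau<\infty)$. *)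

(* Defs.v *)
From HB Require Import structures.
From mathcomp Require Import all_boot all_order all_algebra.
From mathcomp Require Import all_classical all_reals all_analysis.
Set Implicit Arguments. Unset Strict Implicit. Unset Printing Implicit Defensive.
Import Order.TTheory GRing.Theory Num.Theory.
Local Open Scope classical_set_scope.
Local Open Scope ring_scope.

Definition mutually_independent_rvs {d} {T : measurableType d} {R : realType}
  (P : probability T R) (X : nat -> T -> R) : Prop :=
  forall (s : seq nat) (B : nat -> set R),
    uniq s -> (forall i, measurable (B i)) ->
    P (\bigcap_(i in [set` s]) (X i @^-1` B i)) =
    (\prod_(i <- s) P (X i @^-1` B i))%E.

Section Model.
Variables (R : realType) (alpha beta r c : R).

(* posterior mean under a Beta(alpha,beta) prior *)
Definition post_mean (S0 F0 : R) : R := (alpha + S0) / (alpha + beta + S0 + F0).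

Definition trusts (th : R) : bool := 0 <= r * th - c * (1 - th).

(* Given the realized outcomes x, where x s is X_{s+1} (round s+1),
   model_state x t = (hat S_t, hat F_t, A_{t+1}), where
   A_{t+1} = 1 iff trusts(hat theta_n) for all n in {0,...,t}. *)
Fixpoint model_state (x : nat -> R) (t : nat) : R * R * bool :=
  match t with
  | 0 => (0, 0, trusts (post_mean 0 0))
  | t'.+1 =>
      let: (S0, F0, a) := model_state x t' in
      let S' := if a then S0 + x t' else S0 in
      let F' := if a then F0 + (1 - x t') else F0 in
      (S', F', a && trusts (post_mean S' F'))
  end.

(* A_t (for t >= 1; A_0 is unused) *)
Definition act (x : nat -> R) (t : nat) : bool :=
  match t with 0 => true | t'.+1 => (model_state x t').2 end.
Definition Shat (x : nat -> R) (t : nat) : R := (model_state x t).1.1.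
Definition Fhat (x : nat -> R) (t : nat) : R := (model_state x t).1.2.
Definition theta_hat (x : nat -> R) (t : nat) : R := post_mean (Shat x t) (Fhat x t).

Definition quits (x : nat -> R) : Prop :=
  exists t : nat, r * theta_hat x t - c * (1 - theta_hat x t) < 0.

End Model.

(* Main.v *)
Require Import Defs.
From HB Require Import structures.
From mathcomp Require Import all_boot all_order all_algebra.
From mathcomp Require Import all_classical all_reals all_analysis.
From mathcomp Require Import ring lra.
Import Order.TTheory GRing.Theory Num.Theory.
Local Open Scope classical_set_scope.
Local Open Scope ring_scope.
Section Det.
Variables (R : realType) (a b r c : R).
Definition Ssum (x : nat -> R) (t : nat) : R := \sum_(s < t) x s.
Definition Fsum (x : nat -> R) (t : nat) : R := \sum_(s < t) (1 - x s).
Definition pure (x : nat -> R) t := trusts r c (post_mean a b (Ssum x t) (Fsum x t)).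

Lemma state_pure x t : (forall n, (n < t)%N -> pure x n) ->
  model_state a b r c x t = (Ssum x t, Fsum x t, pure x t).
Proof.
elim: t => [|t IH] H.
  by rewrite /= /pure /Ssum /Fsum !big_ord0.
rewrite /= IH; last by move=> n Hn; apply: H; apply: ltnW.
have -> : pure x t by apply: H.
by rewrite /pure /Ssum /Fsum !big_ord_recr.
Qed.

Lemma quitsE x : quits a b r c x <-> exists t, ~~ pure x t.
Proof.
split.
  move=> [t Ht]; apply/not_existsP => /= Hn.
  have Hall : forall n, pure x n by move=> n; apply/negPn/negP => /(Hn n).
  move: Ht; rewrite /theta_hat /Shat /Fhat state_pure //.
  by move: (Hall t); rewrite /pure /trusts /= => h; rewrite ltNge h.
move=> Hex.
have Hex' : exists t, (fun t => ~~ pure x t) t by [].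
case: (ex_minnP Hex') => t Ht Hmin.
exists t; rewrite /theta_hat /Shat /Fhat state_pure /=.
  by move: Ht; rewrite /pure /trusts ltNge.
move=> n Hn; apply/negPn/negP => /Hmin; rewrite leqNgt Hn //.
Qed.
End Det.
Arguments Ssum {R}. Arguments Fsum {R}. Arguments pure {R}.
Lemma pure_iff (R : realType) (a b r c : R) x t : 0 < r -> 0 < c -> 0 < a -> 0 <= b ->
  pure a b r c x t = (c / (c + r) * (a + b + t%:R) - a <= Ssum x t).
Proof.
move=> hr hc ha hb.
have hF : Fsum x t = t%:R - Ssum x t.
  by rewrite /Fsum sumrB sumr_const card_ord.
rewrite /pure /trusts /post_mean hF.
set S := Ssum x t.
have -> : a + b + S + (t%:R - S) = a + b + t%:R by ring.
set D := a + b + t%:R.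
have hD : 0 < D by rewrite /D; have := ler0n R t; lra.
have hcr : 0 < c + r by lra.
have -> : r * ((a + S) / D) - c * (1 - (a + S) / D) = ((r + c) * (a + S) - c * D) * D^-1.
  by field; lra.
rewrite pmulr_lge0 ?invr_gt0 // lerBlDr mulrAC ler_pdivrMr //.
apply/idP/idP => h; nra.
Qed.
Section Var.
Context d (T : measurableType d) (R : realType) (P : probability T R) (theta : R) (E : nat -> set T).
Hypothesis mE : forall i, measurable (E i).
Hypothesis PE : forall i, P (E i) = theta%:E.
Hypothesis PEE : forall i j, i != j -> P (E i `&` E j) = (theta ^+ 2)%:E.

Definition Sy (t : nat) (w : T) : R := \sum_(i < t) (\1_(E i) w : R).

Lemma mSy t : measurable_fun setT (Sy t).
Proof.
by apply: measurable_sum => i; apply: measurable_realfun.measurable_indic.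
Qed.

Lemma Sy_ge0 t w : 0 <= Sy t w.
Proof. by apply: sumr_ge0 => i _; rewrite indicE; case: (_ \in _). Qed.

Lemma int_S t : (\int[P]_w (Sy t w)%:E = (t%:R * theta)%:E)%E.
Proof.
rewrite (eq_integral (fun w => \sum_(i < t) (\1_(E i) w : R)%:E)%E); last first.
  by move=> w _; rewrite /Sy sumEFin.
rewrite ge0_integral_sum //; last first.
  by move=> i; apply/measurable_realfun.measurable_EFinP; apply: measurable_realfun.measurable_indic.
rewrite (eq_bigr (fun _ => theta%:E)); last first.
  by move=> i _; rewrite integral_indic // setIT; exact: PE.
by rewrite (sumEFin _ (fun _ => true) (fun _ => theta)) sumr_const card_ord mulr_natl.
Qed.

Lemma Sy_sq t w : (Sy t w) ^+ 2 =
  \sum_(p : 'I_t * 'I_t) (\1_(E p.1 `&` E p.2) w : R).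
Proof.
rewrite /Sy expr2 mulr_suml.
under eq_bigr do rewrite mulr_sumr.
rewrite pair_bigA /=; apply: eq_bigr => p _.
by rewrite indicI.
Qed.

Lemma int_sq t : (\int[P]_w ((Sy t w) ^+ 2)%:E =
   (t%:R * (theta ^+ 2 * t%:R + (theta - theta ^+ 2)))%:E)%E.
Proof.
rewrite (eq_integral (fun w => \sum_(p : 'I_t * 'I_t) (\1_(E p.1 `&` E p.2) w : R)%:E)%E); last first.
  by move=> w _; rewrite Sy_sq sumEFin.
rewrite ge0_integral_sum //; last first.
  move=> p; apply/measurable_realfun.measurable_EFinP; apply: measurable_realfun.measurable_indic.
  exact: measurableI.
rewrite (eq_bigr (fun p : 'I_t * 'I_t => (if p.1 == p.2 then theta else theta ^+ 2)%:E)); last first.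
  move=> [i j] _; rewrite integral_indic //=; last exact: measurableI.
  rewrite setIT; case: eqP => [->|/eqP hij].
    by rewrite setIid; exact: PE.
  exact: PEE.
rewrite sumEFin.
congr (_%:E).
rewrite -(pair_bigA _ (fun i j : 'I_t => if i == j then theta else theta ^+ 2)) /=.
have -> : t%:R * (theta ^+ 2 * t%:R + (theta - theta ^+ 2)) = \sum_(i < t) (theta ^+ 2 * t%:R + (theta - theta ^+ 2)).
  by rewrite sumr_const card_ord mulr_natl.
apply: eq_bigr => i _.
rewrite (bigD1 i) //= eqxx (eq_bigr (fun _ => theta ^+ 2)); last first.
  by move=> j /negbTE; rewrite eq_sym => ->.
have h : \sum_(j < t) theta ^+ 2 = theta ^+ 2 + \sum_(j < t | j != i) theta ^+ 2.
  by rewrite (bigD1 i).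
move: h; rewrite sumr_const card_ord -mulr_natr => h.
lra.
Qed.

Lemma int_Z t : 0 <= theta -> (\int[P]_w ((Sy t w - t%:R * theta) ^+ 2)%:E =
   (t%:R * theta * (1 - theta))%:E)%E.
Proof.
move=> th0.
set a := t%:R * theta.
have ha : 0 <= a by rewrite /a mulr_ge0 // ler0n.
have mZ : measurable_fun setT (fun w => Sy t w - a) :=
  measurable_realfun.measurable_funB (mSy t) (measurable_cst a).
have mZ2 := proj2 (measurable_realfun.measurable_EFinP setT (fun w => (Sy t w - a) ^+ 2))
   (measurable_realfun.measurable_funX 2 mZ).
have mS2 := proj2 (measurable_realfun.measurable_EFinP setT (fun w => (Sy t w) ^+ 2))
   (measurable_realfun.measurable_funX 2 (mSy t)).
have mS := proj2 (measurable_realfun.measurable_EFinP setT (Sy t)) (mSy t).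
have mSa := proj2 (measurable_realfun.measurable_EFinP setT (fun w => 2 * a * Sy t w))
   (measurable_realfun.measurable_funM (measurable_cst (2 * a)) (mSy t)).
have e1 : (\int[P]_w ((Sy t w - a) ^+ 2)%:E + \int[P]_w ((2 * a) * (Sy t w))%:E
   = \int[P]_w ((Sy t w) ^+ 2)%:E + \int[P]_w (cst (a ^+ 2)%:E w))%E.
  rewrite -ge0_integralD //; last first.
  - by move=> w _; rewrite lee_fin mulr_ge0 ?Sy_ge0 ?mulr_ge0.
  - by move=> w _; rewrite lee_fin sqr_ge0.
  rewrite -ge0_integralD //; last 2 first.
  - by move=> w _; rewrite lee_fin sqr_ge0.
  - by move=> w _; rewrite /= lee_fin sqr_ge0.
  apply: eq_integral => w _; rewrite -!EFinD /=; congr (_%:E); ring.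
move: e1.
under [X in (_ + X)%E]eq_integral do rewrite EFinM.
rewrite ge0_integralZl //; last 2 first.
- by move=> w _; rewrite lee_fin Sy_ge0.
- by rewrite lee_fin mulr_ge0.
rewrite int_S int_sq integral_cst //.
rewrite [X in ((a ^+ 2)%:E * X)%E](_ : _ = 1%E); last exact: probability_setT.
rewrite mule1 -EFinM.
have : (0 <= \int[P]_w ((Sy t w - a) ^+ 2)%:E)%E.
  by apply: integral_ge0 => w _; rewrite lee_fin sqr_ge0.
case: (\int[P]_w ((Sy t w - a) ^+ 2)%:E)%E => [x| |] //= _.
  rewrite -!EFinD => /eqP; rewrite eqe => /eqP h.
  congr (_%:E); rewrite /a in h *; lra.
Qed.
End Var.
Arguments Sy {d T R} E t w.
Theorem lemma3p1 (d : measure_display) (T : measurableType d) (R : realType)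
  (P : probability T R) (theta : R) (c r alpha beta : nat)
  (X : nat -> {RV P >-> R}) :
  0 < theta < 1 ->
  (0 < c)%N -> (0 < r)%N -> (0 < alpha)%N -> (0 < beta)%N ->
  mutually_independent_rvs P (fun t => X t : T -> R) ->
  (forall t, P [set w | X t w = 1] = theta%:E) ->
  (forall t, P [set w | X t w = 0] = (1 - theta)%:E) ->
  theta < c%:R / (c%:R + r%:R) ->
  P [set w | quits alpha%:R beta%:R r%:R c%:R (fun s => X s w)] = 1%E.
Proof.
move=> /andP[th0 th1] hc hr ha hb indep P1 P0 hlt.
have hc' : 0 < (c%:R : R) by rewrite ltr0n.
have hr' : 0 < (r%:R : R) by rewrite ltr0n.
have ha' : 0 < (alpha%:R : R) by rewrite ltr0n.
have hb' : 0 <= (beta%:R : R) by rewrite ler0n.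
set A := [set w | quits _ _ _ _ (fun s => X s w)].
pose m t : R := c%:R / (c%:R + r%:R) * (alpha%:R + beta%:R + t%:R) - alpha%:R.
pose Ssm t w := Ssum (fun s => X s w) t.
have mSsm t : measurable_fun setT (Ssm t).
  by apply: measurable_sum => i; exact: measurable_funPT.
have mB t : measurable [set w | Ssm t w < m t].
  have := mSsm t measurableT _ (measurable_itv `]-oo, m t[); rewrite setTI.
  congr measurable; apply/seteqP; split => w /=; rewrite in_itv //=.
have hAeq : A = \bigcup_t [set w | Ssm t w < m t].
  apply/seteqP; split => w.
  - move=> /quitsE [t ht]; exists t => //=.
    by rewrite ltNge -pure_iff.
  - move=> [t _ /=]; rewrite ltNge -pure_iff // => h.
    by apply/quitsE; exists t.
have mA : measurable A by rewrite hAeq; exact: bigcupT_measurable.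
pose E i := (X i : T -> R) @^-1` [set 1].
pose E0 i := (X i : T -> R) @^-1` [set 0].
have mE i : measurable (E i) := measurable_funPTI (X i) (measurable_set1 1).
have mE0 i : measurable (E0 i) := measurable_funPTI (X i) (measurable_set1 0).
have PE i : P (E i) = theta%:E by exact: P1.
have PEE i j : i != j -> P (E i `&` E j) = (theta ^+ 2)%:E.
  move=> hij.
  have := indep [:: i; j] (fun _ => [set 1]); rewrite /= inE hij /=.
  move=> /(_ isT (fun _ => measurable_set1 1)).
  rewrite !big_cons big_nil P1 P1 mule1 -EFinM -expr2 => <-.
  congr (P _); apply/seteqP; split => w /=.
  - move=> [h1 h2] k; rewrite /= !inE => /orP[] /eqP ->; by [].
  - by move=> h; split; apply: h; rewrite /= !inE eqxx ?orbT.
pose N := \bigcup_i ~` (E i `|` E0 i).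
have mN : measurable N.
  by apply: bigcupT_measurable => i; apply: measurableC; apply: measurableU.
have PN : P N = 0%E.
  apply/(negligibleP P mN); apply: negligible_bigcup => i.
  have mC : measurable (~` (E i `|` E0 i)) by apply: measurableC; apply: measurableU.
  apply/(negligibleP P mC).
  change (P (~` (E i `|` E0 i)) = 0%E).
  rewrite probability_setC; last by apply: measurableU.
  rewrite measureU //; last first.
    apply/seteqP; split => w // [/= h1 h0].
    by move: h1 h0; rewrite /E /E0 /preimage /= => -> /eqP; rewrite oner_eq0.
  rewrite [X in (1 - X)%E](_ : _ = 1%E) ?subee //.
  change (P (E i) + P (E0 i) = 1)%E.
  rewrite PE (_ : P (E0 i) = (1 - theta)%:E); last exact: P0.
  rewrite -EFinD; congr (_%:E); lra.
pose C := ~` A `&` ~` N.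
have mC : measurable C by apply: measurableI; apply: measurableC.
have PnA : P (~` A) = P C.
  have e : ~` A = C `|` (~` A `&` N) by rewrite -setIUr setvU setIT.
  have mAN : measurable (~` A `&` N) by apply: measurableI => //; apply: measurableC.
  have h0 : P (~` A `&` N) = 0%E.
    apply/eqP; rewrite eq_le measure_ge0 andbT -PN; apply: le_measure; rewrite ?inE //.
  transitivity (P (C `|` (~` A `&` N))); first by rewrite -e.
  rewrite measureU //; last first.
    by rewrite setIACA setICl setI0.
  change (P C + P (~` A `&` N) = P C)%E.
  by rewrite h0 adde0.
have hle t : 0 < m t - t%:R * theta ->
    (((m t - t%:R * theta) ^+ 2)%:E * P C <= (t%:R * theta * (1 - theta))%:E)%E.
  move=> hD.
  set D := m t - t%:R * theta.
  rewrite -(@int_Z _ _ _ P theta E mE PE PEE t (ltW th0)).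
  rewrite (_ : P C = (\int[P]_w (\1_C w : R)%:E)%E); last first.
    by rewrite integral_indic // setIT.
  rewrite -(integralZl_indic measurableT (fun _ => C)) //; last first.
    by rewrite ltNge sqr_ge0.
  apply: ge0_le_integral => //.
  - by move=> w _; rewrite lee_fin mulr_ge0 ?sqr_ge0 // indicE ler0n.
  - apply/measurable_realfun.measurable_EFinP.
    apply: measurable_realfun.measurable_funM; first exact: measurable_cst.
    exact: measurable_realfun.measurable_indic.
  - apply/measurable_realfun.measurable_EFinP.
    apply: measurable_realfun.measurable_funX.
    exact: (measurable_realfun.measurable_funB (@mSy _ _ _ E mE t) (measurable_cst (t%:R * theta))).
  move=> w _; rewrite lee_fin indicE.
  case: (boolP (w \in C)) => [/set_mem [hA hN] | _]; last by rewrite mulr0 sqr_ge0.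
  rewrite mulr1.
  have hX i : X i w = 1 \/ X i w = 0.
    case: (pselect ((E i `|` E0 i) w)) => [[h|h]|h]; [by left|by right|].
    by exfalso; apply: hN; exists i.
  have hS : Ssm t w = Sy E t w.
    rewrite /Ssm /Ssum /Sy; apply: eq_bigr => i _; rewrite indicE.
    case: (hX i) => h.
      by rewrite mem_set.
    rewrite memNset ?h //.
    by rewrite /E /preimage /= h => /esym/eqP; rewrite oner_eq0.
  have hm : m t <= Ssm t w.
    have : pure alpha%:R beta%:R r%:R c%:R (fun s => X s w) t.
      apply/negPn/negP => hp; apply: hA; apply/quitsE; exists t; exact: hp.
    by rewrite pure_iff.
  rewrite -hS.
  have hz : D <= Ssm t w - t%:R * theta by rewrite /D lerD2r.
  by rewrite !expr2; apply: ler_pM => //; apply: ltW.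
have hnA0 : P (~` A) = 0%E.
  rewrite PnA.
  have PC0 : (0 <= P C)%E by exact: measure_ge0.
  have PC1 : (P C <= 1)%E by exact: probability_le1.
  have [q hq] : exists q, P C = q%:E.
    exists (fine (P C)); rewrite fineK // ge0_fin_numE //.
    exact: le_lt_trans PC1 (ltey _).
  rewrite hq in hle PC0 *; rewrite lee_fin in PC0.
  move: PC0; rewrite le_eqVlt => /orP [/eqP <- //| qpos].
  exfalso.
  pose p : R := c%:R / (c%:R + r%:R).
  pose dl := p - theta.
  have hdl : 0 < dl by rewrite /dl /p; lra.
  have hp : 0 <= p by rewrite /p divr_ge0 // ?addr_ge0 // ltW.
  pose X1 := 2 * alpha%:R / dl.
  pose Y1 := 4 / (dl ^+ 2 * q).
  have hX1 : 0 <= X1 by rewrite /X1 divr_ge0 // ?mulr_ge0 // ltW.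
  have hY1 : 0 <= Y1 by rewrite /Y1 divr_ge0 // ?mulr_ge0 ?sqr_ge0 // ltW.
  pose K := X1 + Y1 + 1.
  have hK0 : 0 <= K by rewrite /K; lra.
  pose t := Num.Def.archi_bound K.
  have hKt : K < t%:R := archi_boundP hK0.
  have ht1 : X1 < t%:R by rewrite /K in hKt; lra.
  have ht2 : Y1 < t%:R by rewrite /K in hKt; lra.
  have ht0 : 0 < (t%:R : R) by rewrite /K in hKt; lra.
  have h1 : 2 * alpha%:R < t%:R * dl by rewrite -ltr_pdivrMr.
  have h2 : 4 < t%:R * (dl ^+ 2 * q) by rewrite -ltr_pdivrMr // mulr_gt0 // exprn_gt0.
  have eD : m t - t%:R * theta = dl * t%:R + p * (alpha%:R + beta%:R) - alpha%:R.
    by rewrite /m /dl /p; ring.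
  have hpab : 0 <= p * (alpha%:R + beta%:R) by rewrite mulr_ge0 // addr_ge0 // ltW.
  set u := dl * t%:R / 2.
  have hu0 : 0 < u by rewrite /u; apply: divr_gt0 => //; apply: mulr_gt0.
  have huD : u <= m t - t%:R * theta by rewrite eD /u; lra.
  have hDpos : 0 < m t - t%:R * theta by lra.
  have := hle t hDpos; rewrite -EFinM lee_fin.
  set D := m t - t%:R * theta => hq'.
  have hth : t%:R * theta * (1 - theta) <= t%:R.
    rewrite -[X in _ <= X]mulr1 -mulrA ler_wpM2l ?ler0n //; nra.
  have hu2 : u * u <= D ^+ 2 by rewrite expr2; apply: ler_pM => //; apply: ltW.
  have hq2 : u * u * q <= D ^+ 2 * q by rewrite ler_wpM2r // ltW.
  have eu : u * u * q = t%:R * (t%:R * (dl ^+ 2 * q)) / 4 by rewrite /u; field.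
  have : t%:R * 4 < t%:R * (t%:R * (dl ^+ 2 * q)) by rewrite ltr_pM2l.
  lra.
rewrite (_ : A = ~` (~` A)); last by rewrite setCK.
rewrite probability_setC; last exact: measurableC.
by rewrite hnA0 sube0.
Qed.
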